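(* Let $m,n\geq 2$ and let $V\subset [m]\times[n]$. Then: (i) if $V$ is a forest with $k$ connected components, then $V$ is complete if and only if $|V|=m+n-k$; (ii) if $|V|=m+n-1$, then $V$ is a tree if and only if $V$ is complete and connected; (iii) if $V$ is complete and connected, then $|V|\geq m+n-1$, and $|V|=m+n-1$ if and only if $V$ is a tree.
   Context: $[m]=\{1,\dots,m\}$. $G_{m,n}$ is the graph with vertex set $[m]\times[n]$ in which two distinct vertices $u=(u_1,u_2)$, $v=(v_1,v_2)$ are adjacent iff $u_1=v_1$ or $u_2=v_2$ (same row or same column). A subset $V\subset[m]\times[n]$ is regarded as the induced subgraph of $G_{m,n}$; a path in $V$ is a sequence of vertices of $V$ in which consecutive vertices are adjacent; $V$ is connected if any two distinct vertices of $V$ are joined by a path in $V$, and connected components are understood for this induced graph. A circuit is a cyclic sequence $v_0,v_1,\dots,v_{s-1}$ ($s\ge 4$) of pairwise distinct vertices $v_k=(i_k,j_k)$ such that, with indices taken modulo $s$, $v_k$ and $v_{k+1}$ are adjacent and $(i_{k+2}-i_k)(j_{k+2}-j_k)\neq 0$ for every $k$ (no three cyclically consecutive vertices lie in one row or one column). $V$ is a forest if it contains no circuit, and a tree if it is a connected forest. $V$ is complete if $\{i:(i,j)\in V\}=[m]$ and $\{j:(i,j)\in V\}=[n]$. *)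

(* Defs.v *)
From mathcomp Require Import all_boot.
Set Implicit Arguments. Unset Strict Implicit. Unset Printing Implicit Defensive.

Section Rook.
Variables m n : nat.
Definition vtx := ('I_m * 'I_n)%type.

Definition adj (u v : vtx) : bool := (u != v) && ((u.1 == v.1) || (u.2 == v.2)).

Definition adjV (V : {set vtx}) : rel vtx :=
  fun u v => [&& u \in V, v \in V & adj u v].

Definition connectedV (V : {set vtx}) : Prop :=
  forall u v, u \in V -> v \in V -> u != v -> connect (adjV V) u v.

Definition components (V : {set vtx}) : {set {set vtx}} :=
  [set [set v in V | connect (adjV V) u v] | u in V].

(* a circuit in V: a cyclic sequence of s >= 4 pairwise distinct vertices of V,
   cyclically consecutive ones adjacent, and no three cyclically consecutive
   ones in a common row or column: (i_{k+2}-i_k)(j_{k+2}-j_k) <> 0. *)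
Definition is_circuit (V : {set vtx}) (c : seq vtx) : Prop :=
  let s := size c in
  [/\ 4 <= s, uniq c, {subset c <= V},
      forall k, k < s -> forall x0, adj (nth x0 c k) (nth x0 c ((k + 1) %% s)) &
      forall k, k < s -> forall x0,
        ((nth x0 c ((k + 2) %% s)).1 != (nth x0 c k).1) &&
        ((nth x0 c ((k + 2) %% s)).2 != (nth x0 c k).2)].

Definition forest (V : {set vtx}) : Prop := forall c, ~ is_circuit V c.

Definition tree (V : {set vtx}) : Prop := connectedV V /\ forest V.

Definition complete (V : {set vtx}) : Prop :=
  (forall i : 'I_m, exists j : 'I_n, (i, j) \in V) /\
  (forall j : 'I_n, exists i : 'I_m, (i, j) \in V).
End Rook.

(* Main.v *)
Require Import Defs.
From mathcomp Require Import all_boot zify.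
From Stdlib Require Import Classical.
Set Implicit Arguments. Unset Strict Implicit. Unset Printing Implicit Defensive.

Section Rk.
Variables m n : nat.
Local Notation T := (vtx m n).

Definition link (b : bool) (u v : T) : bool :=
  (u != v) && (if b then u.1 == v.1 else u.2 == v.2).

Lemma pair_eq (u v : T) : u.1 = v.1 -> u.2 = v.2 -> u = v.
Proof. by case: u v => a b [c d] /= -> ->. Qed.

Lemma link_adj b u v : link b u v -> adj u v.
Proof. by rewrite /link /adj; case: b => /andP[-> /= ->] //; rewrite orbT. Qed.

Lemma adjC (u v : T) : adj u v = adj v u.
Proof. by rewrite /adj eq_sym (eq_sym u.1) (eq_sym u.2). Qed.

Lemma link_tri b x y z : link b x y -> link (~~ b) y z ->
  (z.1 != x.1) && (z.2 != x.2).
Proof.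
rewrite /link; case: b => /andP[nxy /eqP e1] /andP[nyz /eqP e2] /=.
  apply/andP; split; apply/eqP => h.
    by move/eqP: nyz; apply; apply: pair_eq; rewrite // -e1 h.
  by move/eqP: nxy; apply; apply: pair_eq; rewrite // e2 h.
apply/andP; split; apply/eqP => h.
  by move/eqP: nxy; apply; apply: pair_eq; rewrite // e2 h.
by move/eqP: nyz; apply; apply: pair_eq; rewrite // -e1 h.
Qed.

Lemma link_trans b x u y : link b x u -> link b u y -> x != y -> link b x y.
Proof.
rewrite /link; case: b => /andP[_ /eqP e1] /andP[_ /eqP e2] nxy;
  by rewrite nxy e1 e2 eqxx.
Qed.

Lemma circ_of (V : {set T}) (c : seq T) (p : nat) :
  2 <= size c -> ~~ odd (size c) -> uniq c -> {subset c <= V} ->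
  (forall k x0, k < size c ->
     link (odd (k + p)) (nth x0 c k) (nth x0 c ((k + 1) %% size c))) ->
  is_circuit V c.
Proof.
move=> h2 hev hu hs hl.
have [y0 _] : exists y : T, y \in c by case: (c) h2 => [|y ?] // _; exists y; rewrite inE eqxx.
set s := size c in h2 hev hl *.
have oddm : forall k, odd ((k + 1) %% s) = odd (k + 1).
  by move=> k; apply: odd_mod; apply/negbTE.
have tri : forall k x0, k < s ->
   ((nth x0 c ((k + 2) %% s)).1 != (nth x0 c k).1) &&
   ((nth x0 c ((k + 2) %% s)).2 != (nth x0 c k).2).
  move=> k x0 hk.
  have hk1 : (k + 1) %% s < s by rewrite ltn_mod; case: (s) h2.
  apply: (link_tri (hl k x0 hk)).
  have := hl _ x0 hk1.
  rewrite modnDml -addnA /= oddD oddm oddD addn1 /= oddD.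
  by case: (odd k); case: (odd p).
split=> //.
- rewrite leq_eqVlt in h2; case/orP: h2 => [/eqP h2|]; last first.
    rewrite leq_eqVlt => /orP[/eqP h3|//].
    by move: hev; rewrite -h3.
  have := tri 0 y0; rewrite -h2 => /(_ isT).
  by rewrite modnn !eqxx.
- by move=> k hk x0; apply: link_adj (hl k x0 hk).
- by move=> k hk x0; apply: tri.
Qed.
End Rk.

Section Rk2.
Variables m n : nat.
Local Notation T := (vtx m n).

Definition trail (V : {set T}) (w : seq T) : Prop :=
  [/\ uniq w, {subset w <= V} &
      forall i x0, i.+1 < size w -> link (odd i) (nth x0 w i) (nth x0 w i.+1)].

Definition leafless (V : {set T}) : Prop :=
  forall v b, v \in V -> exists2 u, u \in V & link b v u.

Lemma trail_ext V w : leafless V -> trail V w -> 0 < size w ->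
  (exists u, trail V (rcons w u)) \/ (exists c, is_circuit V c).
Proof.
move=> hlf [hu hs hl0] hw.
have [x0 _] : exists x : T, x \in w.
  by case: (w) hw => [|y ?] // _; exists y; rewrite inE eqxx.
set L := (size w).-1.
have hL : L < size w by rewrite /L; case: (size w) hw.
have hsz : size w = L.+1 by rewrite /L; case: (size w) hw.
set x := nth x0 w L.
have xV : x \in V by apply: hs; apply: mem_nth.
have [u uV hxu] := hlf x (odd L) xV.
case: (boolP (u \in w)) => uw; last first.
  left; exists u; split.
  - by rewrite rcons_uniq uw.
  - by move=> y; rewrite mem_rcons inE => /orP[/eqP ->|/hs].
  - move=> i y0; rewrite size_rcons => hi.
    rewrite !nth_rcons.
    have hi' : i < size w by [].
    rewrite hi'.
    case: (ltnP i.+1 (size w)) => hi2; first by apply: hl0.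
    have hiL : i = L by rewrite /L; apply/eqP; rewrite eqn_leq -ltnS -hsz hi' /= -ltnS -hsz.
    have -> : (i.+1 == size w) by rewrite hsz hiL.
    rewrite hiL (set_nth_default x0 y0 hL); exact: hxu.
right.
set j := index u w.
have hj : j < size w by rewrite index_mem.
have hnj : nth x0 w j = u by rewrite nth_index.
have hjL : j < L.
  rewrite ltn_neqAle -ltnS -hsz hj andbT.
  apply/eqP => hjL; move: hxu; rewrite /link /x -hjL hnj eqxx //.
have [j' [hj'L hpar hlk]] : exists j', [/\ j' < L, odd j' != odd L &
    link (odd L) x (nth x0 w j')].
  case: (boolP (odd j == odd L)) => hpar; last by exists j; rewrite -hnj in hxu.
  have hj1 : j.+1 < L.
    rewrite ltn_neqAle hjL andbT; apply/eqP => e.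
    by move: hpar; rewrite -e /=; case: (odd j).
  exists j.+1; split => //.
    by move: hpar; rewrite /=; case: (odd j); case: (odd L).
  apply: (link_trans hxu).
    have := hl0 j x0 (ltn_trans hj1 hL); rewrite hnj (eqP hpar); exact.
  rewrite /x nth_uniq // ?(ltn_trans hj1 hL) //.
  by rewrite eq_sym neq_ltn hj1.
exists (drop j' w).
have hsd : size (drop j' w) = (L - j').+1 by rewrite size_drop hsz subSn // ltnW.
apply: (circ_of (p := j')).
- by rewrite hsd ltnS subn_gt0.
- rewrite hsd /= oddB ?(ltnW hj'L) //.
  by move: hpar; case: (odd j'); case: (odd L).
- exact: drop_uniq.
- by move=> y /mem_drop /hs.
- move=> k y0; rewrite hsd => hk.
  rewrite !nth_drop.
  case: (ltnP k.+1 (L - j').+1) => hk1.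
    rewrite modn_small ?addn1 // addnS addnC.
    apply: hl0; rewrite hsz; move: hk1; rewrite ltnS => hk1.
    by rewrite ltnS -(subnK (ltnW hj'L)) addnC ltn_add2r.
  have hk' : k = L - j' by apply/eqP; rewrite eqn_leq -ltnS hk -ltnS.
  rewrite addn1 -hk' modnn addn0 hk' subnK ?(ltnW hj'L) // addnC subnK ?(ltnW hj'L) //.
  rewrite (set_nth_default x0 y0 hL) (set_nth_default x0 y0 (ltn_trans hj'L hL)).
  exact: hlk.
Qed.

End Rk2.

Section Rk3.
Variables m n : nat.
Local Notation T := (vtx m n).

Lemma leafless_circ (V : {set T}) v0 : leafless V -> v0 \in V ->
  exists c, is_circuit V c.
Proof.
move=> hlf v0V; apply: NNPP => hnc.
have big : forall k, exists w, trail V w /\ size w = k.+1.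
  elim=> [|k [w [tw sw]]].
    exists [:: v0]; split => //; split => //.
      by move=> y; rewrite inE => /eqP ->.
  have hw : 0 < size w by rewrite sw.
  have [[u tu]|//] := trail_ext hlf tw hw.
  by exists (rcons w u); rewrite size_rcons sw.
have [w [[hu hs _] sw]] := big #|V|.
have hsub : {subset w <= enum V} by move=> y /hs; rewrite mem_enum.
have := uniq_leq_size hu hsub.
by rewrite sw -cardE ltnn.
Qed.
End Rk3.

Lemma card_same_ker (T1 T2 T3 : finType) (f : T1 -> T2) (g : T1 -> T3)
  (A : {set T1}) : {in A &, forall a b, (f a == f b) = (g a == g b)} ->
  #|f @: A| = #|g @: A|.
Proof.
move: {2}#|A| (erefl #|A|) => N; elim: N A => [|N IH] A hA hk.
  by move/eqP: hA; rewrite cards_eq0 => /eqP ->; rewrite !imset0 !cards0.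
have [x xA] : exists x, x \in A by apply/set0Pn; rewrite -card_gt0 hA.
have hA' : #|A :\ x| = N by move: hA; rewrite (cardsD1 x A) xA add1n => -[].
rewrite -(setD1K xA) !imsetU1 !cardsU1.
have hk' : {in A :\ x &, forall a b, (f a == f b) = (g a == g b)}.
  by move=> a b /setD1P[_ aA] /setD1P[_ bA]; apply: hk.
rewrite IH //.
have -> : (f x \in f @: (A :\ x)) = (g x \in g @: (A :\ x)); last by [].
apply/imsetP/imsetP => -[y yA e]; exists y => //; move: yA => /setD1P[_ yA];
  apply/eqP; [rewrite -hk // | rewrite hk //]; exact/eqP.
Qed.

Lemma im_alone (T T' : finType) (f : T -> T') (V : {set T}) v :
  v \in V -> (forall u, u \in V -> u != v -> f u != f v) ->
  #|f @: V| = (#|f @: (V :\ v)|).+1.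
Proof.
move=> vV h; rewrite -{1}(setD1K vV) imsetU1 cardsU1.
case: imsetP => [[u /setD1P[uv uV] e]|//].
by move: (h u uV uv); rewrite e eqxx.
Qed.

Lemma im_shared (T T' : finType) (f : T -> T') (V : {set T}) v u :
  v \in V -> u \in V -> u != v -> f u = f v ->
  #|f @: V| = #|f @: (V :\ v)|.
Proof.
move=> vV uV uv e; rewrite -{1}(setD1K vV) imsetU1 cardsU1.
case: imsetP => [//|[]]; exists u; [by rewrite !inE uv | by rewrite e].
Qed.

Lemma conn_hom (T : finType) (e e' : rel T) (phi : T -> T) :
  (forall x y, e x y -> connect e' (phi x) (phi y)) ->
  forall a b, connect e a b -> connect e' (phi a) (phi b).
Proof.
move=> h a b /connectP[p hp ->]; elim: p a hp => [|y p IH] a /=.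
  by rewrite connect0.
by move=> /andP[eay hp]; apply: connect_trans (h _ _ eay) (IH _ hp).
Qed.

Section Rk4.
Variables m n : nat.
Local Notation T := (vtx m n).

Definition cls (V : {set T}) (u : T) : {set T} := [set x in V | connect (adjV V) u x].

Lemma compE (V : {set T}) : components V = cls V @: V.
Proof. by []. Qed.

Lemma adjV_sym (V : {set T}) : symmetric (adjV V).
Proof. by move=> x y; rewrite /adjV adjC andbCA. Qed.

Lemma csym (V : {set T}) : connect_sym (adjV V).
Proof. exact: sym_connect_sym (adjV_sym V). Qed.

Lemma cls_eq (V : {set T}) a b : a \in V -> b \in V ->
  (cls V a == cls V b) = connect (adjV V) a b.
Proof.
move=> aV bV; apply/idP/idP.
  move/eqP => e; have : b \in cls V b by rewrite inE bV connect0.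
  by rewrite -e inE => /andP[_ ->].
move=> hab; apply/eqP/setP => x; rewrite !inE.
by rewrite (same_connect (csym V) hab).
Qed.

Lemma adjV_mono (V W : {set T}) : W \subset V -> forall a b,
  connect (adjV W) a b -> connect (adjV V) a b.
Proof.
move=> sWV a b; apply: connect_sub => x y /and3P[xW yW h].
by apply: connect1; rewrite /adjV (subsetP sWV _ xW) (subsetP sWV _ yW).
Qed.

Definition clique (V : {set T}) v := forall a b, a \in V -> b \in V ->
  adj v a -> adj v b -> a = b \/ adj a b.

Lemma K_iso (V : {set T}) v : v \in V -> (forall u, u \in V -> ~~ adj v u) ->
  #|components V| = (#|components (V :\ v)|).+1.
Proof.
move=> vV hiso; set V' := V :\ v.
have esub : forall a b, adjV V a b -> adjV V' a b.
  move=> a b /and3P[aV bV ab]; rewrite /adjV !inE aV bV ab !andbT.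
  apply/andP; split; apply/eqP => e.
    by move: (hiso b bV); rewrite -e ab.
  by move: (hiso a aV); rewrite adjC -e ab.
have cv : forall x, connect (adjV V) v x -> x = v.
  move=> x /connectP[[|y p] /= hp -> //].
  by case/andP: hp => /and3P[_ yV h]; move: (hiso y yV); rewrite h.
have ceq : {in V', cls V =1 cls V'}.
  move=> u /setD1P[uv uV]; apply/setP => x; rewrite !inE.
  apply/andP/andP => [[xV hc]|[/andP[_ xV] hc]].
    split; last by apply: connect_sub hc => a b h; apply: connect1; apply: esub.
    rewrite xV andbT; apply/eqP => e; move/eqP: uv; apply.
    by apply: cv; rewrite (csym V) -e.
  by split => //; apply: adjV_mono hc; apply: subsetDl.
have cvv : cls V v = [set v].
  apply/setP => x; rewrite !inE; apply/andP/eqP => [[_ /cv //]|->].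
  by rewrite vV connect0.
have -> : components V = cls V v |: cls V @: V' by rewrite compE -imsetU1 setD1K.
rewrite compE cardsU1 cvv (eq_in_imset ceq).
case: imsetP => [[u uV' e]|//].
have : u \in cls V' u by rewrite inE uV' connect0.
rewrite -e inE => /eqP eu; move: uV'; rewrite eu !inE eqxx //=.
Qed.

Lemma K_clique (V : {set T}) v w : v \in V -> w \in V -> adj v w ->
  clique V v -> #|components V| = #|components (V :\ v)|.
Proof.
move=> vV wV avw hcl; set V' := V :\ v.
have wv : w != v by move: avw; rewrite /adj eq_sym => /andP[].
have wV' : w \in V' by rewrite /V' !inE wv wV.
have ceq : forall a b, a \in V' -> b \in V' ->
    connect (adjV V) a b = connect (adjV V') a b.
  move=> a b aV' bV'; apply/idP/idP; last by apply: adjV_mono; apply: subsetDl.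
  pose phi x := if x == v then w else x.
  move=> hab.
  suff hh : forall x y, adjV V x y -> connect (adjV V') (phi x) (phi y).
    have := conn_hom hh hab; rewrite /phi.
    by move: aV' bV' => /setD1P[/negbTE -> _] /setD1P[/negbTE -> _].
  move=> x y /and3P[xV yV axy]; rewrite /phi.
  have key : forall z, z \in V -> z != v -> adj v z -> connect (adjV V') w z.
    move=> z zV zv avz; case: (hcl w z wV zV avw avz) => [->|awz].
      exact: connect0.
    by apply: connect1; rewrite /adjV wV' awz /V' !inE zv zV.
  case: (eqVneq x v) => [ex|xv]; case: (eqVneq y v) => [ey|yv].
  - by move: axy; rewrite ex ey /adj eqxx.
  - by apply: key => //; rewrite -ex.
  - rewrite (csym V'); apply: key => //.
    by rewrite adjC -ey.
  - by apply: connect1; rewrite /adjV /V' !inE xv yv xV yV axy.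
have -> : components V = cls V @: V'.
  rewrite compE.
  have -> : cls V @: V = cls V v |: cls V @: V' by rewrite -imsetU1 setD1K.
  apply/setUidPr; rewrite sub1set.
  apply/imsetP; exists w => //; apply/eqP; rewrite cls_eq //.
  by apply: connect1; rewrite /adjV vV wV avw.
rewrite compE; apply: card_same_ker => a b aV' bV'.
have aV : a \in V by move: aV'; rewrite inE => /andP[].
have bV : b \in V by move: bV'; rewrite inE => /andP[].
by rewrite !cls_eq // ceq.
Qed.

Lemma forest_clique (V : {set T}) v : v \in V -> clique V v ->
  forest (V :\ v) -> forest V.
Proof.
move=> vV hcl hf c hc; apply: (hf c).
case: hc => h4 hu hs hadj htri.
case: (boolP (v \in c)) => vc; last first.
  split => // x xc; rewrite !inE hs // andbT; apply/eqP => e; by move: vc; rewrite -e xc.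
exfalso.
set s := size c in h4 hadj htri.
have s0 : 0 < s by apply: leq_trans h4.
set k := index v c.
have hk : k < s.
  by rewrite /s /k index_mem.
set k' := (k + (s - 1)) %% s.
have hk' : k' < s by rewrite ltn_mod.
have e1 : (k' + 1) %% s = k.
  by rewrite modnDml -addnA subnK // modnDr modn_small.
have e2 : (k' + 2) %% s = (k + 1) %% s.
  rewrite modnDml -addnA (_ : s - 1 + 2 = 1 + s); last first.
    by clear -s0; lia.
  by rewrite addnA modnDr.
have h1 := hadj k' hk' v; rewrite e1 nth_index // adjC in h1.
have h2 := hadj k hk v; rewrite nth_index // in h2.
have h3 := htri k' hk' v; rewrite e2 in h3.
have hk1 : (k + 1) %% s < s by rewrite ltn_mod.
case: (hcl _ _ (hs _ (mem_nth v hk')) (hs _ (mem_nth v hk1)) h1 h2) => [e|].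
  by move: h3; rewrite e !eqxx.
by move=> hab; move: h3; case/andP: hab => _ /orP[/eqP->|/eqP->]; rewrite eqxx ?andbF.
Qed.

End Rk4.

Section Rk5.
Variables m n : nat.
Local Notation T := (vtx m n).

Lemma ar0 a b c : a.+1 + b + c = a + b + c + 1. Proof. lia. Qed.
Lemma ar1 a b c : a.+1 + b.+1 + c = a + b + c.+1 + 1. Proof. lia. Qed.

Lemma ar2 a b c a' b' k : b + a + c = b' + a' + k + 1 -> a + b + c = a' + b' + k + 1.
Proof. lia. Qed.

Lemma leaf_gen (T1 T2 : finType) (f : T -> T1) (g : T -> T2)
  (hadj : forall u v, adj u v = (u != v) && ((f u == f v) || (g u == g v)))
  (V : {set T}) v : v \in V -> (forall u, u \in V -> u != v -> f u != f v) ->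
  #|f @: V| + #|g @: V| + #|components (V :\ v)| =
  #|f @: (V :\ v)| + #|g @: (V :\ v)| + #|components V| + 1 /\ clique V v.
Proof.
move=> vV hleaf.
have nb : forall a, a \in V -> adj v a -> g a = g v.
  move=> a aV; rewrite hadj => /andP[va /orP[/eqP e|/eqP e] //].
  by move: (hleaf a aV); rewrite eq_sym va e eqxx => /(_ isT).
have hcl : clique V v.
  move=> a b aV bV ava avb; case: (eqVneq a b) => [->|ab]; first by left.
  by right; rewrite hadj ab (nb a aV ava) (nb b bV avb) eqxx orbT.
split => //.
rewrite (im_alone vV hleaf).
case: (pickP [pred u | (u \in V) && (u != v) && (g u == g v)]) => [w /= /andP[/andP[wV wv] /eqP gw]|hno].
  rewrite (im_shared vV wV wv gw).
  have avw : adj v w by rewrite hadj eq_sym wv gw eqxx orbT.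
  rewrite (K_clique vV wV avw hcl); exact: ar0.
have hg : forall u, u \in V -> u != v -> g u != g v.
  by move=> u uV uv; move: (hno u) => /=; rewrite uV uv /= => ->.
rewrite (im_alone vV hg).
have hiso : forall u, u \in V -> ~~ adj v u.
  move=> u uV; rewrite hadj; case: (eqVneq v u) => //= vu.
  by rewrite eq_sym (negbTE (hleaf u uV _)) ?(eq_sym u) ?vu // eq_sym (negbTE (hg u uV _)) ?(eq_sym u) ?vu.
rewrite (K_iso vV hiso); exact: ar1.
Qed.

Lemma forest_sub (V W : {set T}) : W \subset V -> forest V -> forest W.
Proof.
move=> sWV hf c [h1 h2 h3 h4 h5]; apply: (hf c); split => //.
by move=> x /h3 /(subsetP sWV).
Qed.

Lemma cnt (T' : finType) (f : T -> T') (V : {set T}) :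
  (forall v, v \in V -> exists u, [/\ u \in V, u != v & f u = f v]) ->
  2 * #|f @: V| <= #|V|.
Proof.
move=> h; rewrite -(sum1_card (mem V)) (partition_big_imset f V) /=.
rewrite mulnC -sum_nat_const; apply: leq_sum => j /imsetP[v vV ->].
rewrite (bigD1 v) /=; last by rewrite vV eqxx.
have [u [uV uv fu]] := h v vV.
rewrite (bigD1 u) /=; last by rewrite uV fu eqxx uv.
lia.
Qed.

Definition RR (V : {set T}) := #|[set v.1 | v in V]|.
Definition CC (V : {set T}) := #|[set v.2 | v in V]|.

Lemma main (V : {set T}) :
  [/\ RR V + CC V <= #|V| + #|components V|,
      forest V -> #|V| + #|components V| <= RR V + CC V &
      ~ forest V -> RR V + CC V < #|V| + #|components V|].
Proof.
move: {2}#|V| (erefl #|V|) => N; elim/ltn_ind: N V => N IH V hN.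
case: (classic (exists v, v \in V /\ ((forall u, u \in V -> u != v -> u.1 != v.1)
         \/ (forall u, u \in V -> u != v -> u.2 != v.2)))) => [[v [vV hl]]|hno].
  set V' := V :\ v.
  have hV : #|V| = #|V'|.+1 by rewrite (cardsD1 v V) vV.
  have hlt : #|V'| < N by rewrite -hN hV.
  have [a b c] := IH #|V'| hlt V' erefl.
  have [eq hcl] : RR V + CC V + #|components V'| =
                  RR V' + CC V' + #|components V| + 1 /\ clique V v.
    case: hl => hl.
      have hadj : forall u w : T, adj u w = (u != w) && ((u.1 == w.1) || (u.2 == w.2)) by [].
      exact: (leaf_gen hadj vV hl).
    have hadj : forall u w : T, adj u w = (u != w) && ((u.2 == w.2) || (u.1 == w.1)).
      by move=> u w; rewrite /adj orbC.
    have [e1 e2] := leaf_gen hadj vV hl.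
    by split => //; apply: ar2 e1.
  have hf : forest V <-> forest V'.
    split; first by apply: forest_sub; apply: subsetDl.
    exact: forest_clique vV hcl.
  split.
  - lia.
  - move=> hF; have := b (proj1 hf hF); lia.
  - move=> hnf; have hnf' : ~ forest V' by move=> /(proj2 hf).
    have := c hnf'; lia.
have hlf : leafless V.
  move=> v bb vV; apply: NNPP => hne; apply: hno; exists v; split => //.
  case: bb hne => hne; [left|right] => u uV uv; apply/negP => /eqP e;
    by apply: hne; exists u => //; rewrite /link eq_sym uv /= e eqxx.
have c1 : 2 * RR V <= #|V|.
  apply: cnt => z zV; have [u uV /andP[vu /eqP e]] := hlf z true zV.
  by exists u; rewrite eq_sym vu e.
have c2 : 2 * CC V <= #|V|.
  apply: cnt => z zV; have [u uV /andP[vu /eqP e]] := hlf z false zV.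
  by exists u; rewrite eq_sym vu e.
case: (set_0Vmem V) => [V0|[v0 v0V]].
  have hF : forest V.
    move=> c [h4 _ hs _ _]; move: h4; case: c hs => [|x c] //= hs _.
    by move: (hs x); rewrite inE eqxx V0 inE => /(_ isT).
  split; [lia| |by []].
  move=> _; rewrite compE V0 imset0 !cards0; lia.
have K1 : 0 < #|components V|.
  by rewrite card_gt0; apply/set0Pn; exists (cls V v0); rewrite compE; apply: imset_f.
split; [lia| |lia].
by move=> hF; have [c hc] := leafless_circ hlf v0V; case: (hF c).
Qed.
End Rk5.

Lemma im_full (T S : finType) (f : T -> S) (V : {set T}) :
  (#|f @: V| = #|S|) <-> (forall s, exists2 v, v \in V & f v = s).
Proof.
split=> [h s|h].
  have e : f @: V = setT.
    by apply/eqP; rewrite eqEcard subsetT cardsT h leqnn.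
  have : s \in f @: V by rewrite e inE.
  by case/imsetP => v vV ->; exists v.
have e : f @: V = setT.
  by apply/setP => s; rewrite inE; have [v vV <-] := h s; apply: imset_f.
by rewrite e cardsT.
Qed.

Lemma complete_iff m n (V : {set vtx m n}) :
  complete V <-> RR V = m /\ CC V = n.
Proof.
have e1 := im_full (fun v : vtx m n => v.1) V; rewrite card_ord in e1.
have e2 := im_full (fun v : vtx m n => v.2) V; rewrite card_ord in e2.
rewrite /RR /CC.
split=> [[h1 h2]|[/e1 h1 /e2 h2]]; split.
- by apply/e1 => i; have [j hj] := h1 i; exists (i, j).
- by apply/e2 => j; have [i hi] := h2 j; exists (i, j).
- by move=> i; have [[a b] hv /= e] := h1 i; exists b; rewrite -e.
- by move=> j; have [[a b] hv /= e] := h2 j; exists a; rewrite -e.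
Qed.

Lemma RR_le m n (V : {set vtx m n}) : RR V <= m.
Proof. by have := max_card (mem [set v.1 | v in V]); rewrite card_ord. Qed.
Lemma CC_le m n (V : {set vtx m n}) : CC V <= n.
Proof. by have := max_card (mem [set v.2 | v in V]); rewrite card_ord. Qed.

Lemma K_conn m n (V : {set vtx m n}) v0 : connectedV V -> v0 \in V ->
  #|components V| = 1.
Proof.
move=> hc v0V; rewrite compE (_ : cls V @: V = [set cls V v0]) ?cards1 //.
apply/setP => X; rewrite inE; apply/imsetP/eqP => [[u uV ->]|->]; last by exists v0.
apply/eqP; rewrite cls_eq //; case: (eqVneq u v0) => [->|uv]; first exact: connect0.
exact: hc.
Qed.

Theorem proposition1p1 (m n : nat) (hm : 2 <= m) (hn : 2 <= n)
    (V : {set vtx m n}) :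
  (forall k : nat, forest V -> #|components V| = k ->
     (complete V <-> #|V| = m + n - k)) /\
  (#|V| = m + n - 1 -> (tree V <-> complete V /\ connectedV V)) /\
  (complete V -> connectedV V ->
     m + n - 1 <= #|V| /\ (#|V| = m + n - 1 <-> tree V)).
Proof.
have [ha hb hc] := main V.
have r1 := RR_le V; have r2 := CC_le V.
split.
  move=> k hF hk; have := hb hF; rewrite hk in ha * => hb'.
  rewrite complete_iff; split => [[e1 e2]|hV]; first lia.
  lia.
have ne : forall v0, v0 \in V -> connectedV V -> complete V ->
    #|V| = m + n - 1 -> forest V.
  move=> v0 v0V hcn hcomp hV; apply: NNPP => hnF.
  have := hc hnF; rewrite (K_conn hcn v0V).
  case/complete_iff: hcomp => e1 e2; lia.
have v0c : complete V -> exists v0, v0 \in V.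
  have m0 : 0 < m by apply: leq_trans hm.
  case=> h1 _; have [j hj] := h1 (Ordinal m0).
  by exists (Ordinal m0, j).
split.
  move=> hV; split.
    case=> hcn hF; have [v0 v0V] : exists v0, v0 \in V.
      by apply/set0Pn; rewrite -card_gt0 hV; lia.
    have := hb hF; rewrite (K_conn hcn v0V) => h.
    split => //; apply/complete_iff; lia.
  case=> hcomp hcn; have [v0 v0V] := v0c hcomp.
  by split => //; apply: ne v0V hcn hcomp hV.
move=> hcomp hcn; have [v0 v0V] := v0c hcomp.
have K1 := K_conn hcn v0V.
case/complete_iff: (hcomp) => e1 e2.
split; first lia.
split; first by move=> hV; split => //; apply: ne v0V hcn hcomp hV.
case=> _ hF; have := hb hF; lia.
Qed.
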